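(* For all positive integers $n>k$, $\mathrm{msum}(n,n-k)=\mathrm{msum}(n,k)$ and $\mathrm{disc}(n,n-k)=\mathrm{disc}(n,k)$.
   Context: For positive integers $n>k$, let $S_n$ be the set of permutations $\pi=(\pi_1,\dots,\pi_n)$ of $1,\dots,n$, with cyclic indexing $\pi_{n+i}=\pi_i$, and $s_i=\sum_{j=0}^{k-1}\pi_{i+j}$ for $i=1,\dots,n$. Define $\mathrm{msum}(\pi,k)=\max\{s_i\}-\frac{k(n+1)}{2}$, $\mathrm{msum}(n,k)=\min_{\pi\in S_n}\mathrm{msum}(\pi,k)$, $\mathrm{disc}(\pi,k)=\max_i|s_i-\frac{k(n+1)}{2}|$, $\mathrm{disc}(n,k)=\min_{\pi\in S_n}\mathrm{disc}(\pi,k)$. *)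

(* Defs.v *)
From mathcomp Require Import all_boot all_order all_algebra all_fingroup.
Set Implicit Arguments. Unset Strict Implicit. Unset Printing Implicit Defensive.
Import Order.TTheory GRing.Theory Num.Theory.
Local Open Scope ring_scope.

(* A permutation pi of {1,...,n} is represented by s : 'S_n (a permutation
   of {0,...,n-1}) via pi_(m+1) = s m + 1.  Cyclic indexing: the entry at
   0-based position m (any natural number) is the entry at position m mod n. *)
Definition cyc_entry (n : nat) (s : 'S_n) (m : nat) : nat :=
  match @insub nat (fun x => x < n)%N _ (m %% n)%N with
  | Some i => (s i).+1
  | None => 0%N
  end.

Definition wsum (n k : nat) (s : 'S_n) (i : nat) : nat :=
  (\sum_(j < k) cyc_entry s (i + j))%N.

Definition center (n k : nat) : rat := (k * (n + 1))%:R / 2%:R.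

Definition msum_perm (n k : nat) (s : 'S_n) : rat :=
  (\max_(i < n) wsum k s i)%N%:R - center n k.

Definition disc_perm (n k : nat) (s : 'S_n) : rat :=
  \big[Num.max/0]_(i < n) `|(wsum k s i)%:R - center n k|.

(* minima over all permutations (the identity value is itself attained,
   so using it as the neutral element gives the true minimum) *)
Definition msum (n k : nat) : rat :=
  \big[Num.min/msum_perm k (1 : 'S_n)]_(s : 'S_n) msum_perm k s.

Definition disc (n k : nat) : rat :=
  \big[Num.min/disc_perm k (1 : 'S_n)]_(s : 'S_n) disc_perm k s.

(* Main.v *)
Require Import Defs.
From mathcomp Require Import all_boot all_order all_algebra all_fingroup.
From mathcomp Require Import zify lra.
Set Implicit Arguments. Unset Strict Implicit. Unset Printing Implicit Defensive.
Import Order.TTheory GRing.Theory Num.Theory.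

Definition revp (N : nat) : 'S_N := perm (@rev_ord_inj N).

Lemma cycE n' (s : 'S_n'.+1) m :
  cyc_entry s m = (s (Ordinal (ltn_pmod m (ltn0Sn n')))).+1.
Proof.
rewrite /cyc_entry; case: insubP => [u _ /= E|].
  by congr (_.+1); congr (s _); apply: val_inj.
by rewrite ltn_pmod.
Qed.

Lemma cyc_mod n (s : 'S_n) m : cyc_entry s (m %% n) = cyc_entry s m.
Proof. by rewrite /cyc_entry modn_mod. Qed.

Lemma wsum_mod n k (s : 'S_n) m : wsum k s (m %% n) = wsum k s m.
Proof.
rewrite /wsum; apply: eq_bigr => j _.
by rewrite -cyc_mod modnDml cyc_mod.
Qed.

Lemma cyc_rev n' (s : 'S_n'.+1) m :
  (cyc_entry (s * revp n'.+1) m + cyc_entry s m = n'.+2)%N.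
Proof.
rewrite !cycE permM /revp permE /=.
set x := s _. have := ltn_ord x. lia.
Qed.

Lemma sum_succ N : (2 * \sum_(x < N) x.+1 = N * N.+1)%N.
Proof.
elim: N => [|N IH]; first by rewrite big_ord0.
rewrite big_ord_recr /= mulnDr IH. lia.
Qed.

Lemma full_sum n' (s : 'S_n'.+1) i :
  (2 * \sum_(j < n'.+1) cyc_entry s (i + j) = n'.+1 * n'.+2)%N.
Proof.
set o := fun j : 'I_n'.+1 => Ordinal (ltn_pmod (i + j) (ltn0Sn n')).
have oinj : injective o.
  move=> a b /(congr1 val) /= /eqP.
  rewrite eqn_modDl !modn_small // => /eqP ab; exact: val_inj.
rewrite (eq_bigr (fun j => (s (o j)).+1)); last by move=> j _; rewrite cycE.
rewrite -(reindex_inj (h := o) (P := xpredT) (F := fun x => (s x).+1) oinj) /=.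
rewrite -(reindex_inj (h := s) (P := xpredT) (F := fun x : 'I_n'.+1 => x.+1) (@perm_inj _ s)) /=.
exact: sum_succ.
Qed.

Lemma split_sum n' k (s : 'S_n'.+1) i : (k <= n'.+1)%N ->
  (\sum_(j < n'.+1) cyc_entry s (i + j) =
   wsum k s i + \sum_(j < n'.+1 - k) cyc_entry s (i + k + j))%N.
Proof.
move=> hk; rewrite /wsum -(big_mkord xpredT (fun j => cyc_entry s (i + j))) -(big_mkord xpredT (fun j => cyc_entry s (i + j))) -(big_mkord xpredT (fun j => cyc_entry s (i + k + j))).
rewrite (big_cat_nat (leq0n k) hk) /=.
congr (_ + _)%N.
rewrite -{1}(add0n k) big_addn.
by apply: eq_bigr => j _; rewrite addnA addnAC.
Qed.

Lemma rest_sum n' k (s : 'S_n'.+1) i :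
  (wsum (n'.+1 - k) (s * revp n'.+1) (i + k) +
   \sum_(j < n'.+1 - k) cyc_entry s (i + k + j) = (n'.+1 - k) * n'.+2)%N.
Proof.
rewrite /wsum -big_split /=.
rewrite (eq_bigr (fun _ => n'.+2)); last by move=> j _; rewrite cyc_rev.
by rewrite sum_nat_const card_ord.
Qed.

Lemma keyrat n' k (s : 'S_n'.+1) i : (k <= n'.+1)%N ->
  ((wsum (n'.+1 - k) (s * revp n'.+1) (i + k))%:R - center n'.+1 (n'.+1 - k)
   = (wsum k s i)%:R - center n'.+1 k :> rat)%R.
Proof.
move=> hk.
have E1 := rest_sum k s i.
have E2 := split_sum s i hk.
have E3 := full_sum s i.
have E4 : (k * (n'.+1 + 1) + (n'.+1 - k) * (n'.+1 + 1) = n'.+1 * n'.+2)%N.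
  by rewrite -mulnDl subnKC // addn1.
rewrite /center !addn1 in E4 *.
move: E1 E2 E3 E4.
set A := wsum _ _ _; set B := wsum _ _ _; set X := (\sum_(j < _) _)%N.
set T := (\sum_(j < _) _)%N; set a := ((n'.+1 - k) * _)%N; set kb := (k * _)%N.
set P := (n'.+1 * n'.+2)%N.
 
move=> /(congr1 (fun x => x%:R : rat)) E1 /(congr1 (fun x => x%:R : rat)) E2.
move=> /(congr1 (fun x => x%:R : rat)) E3 /(congr1 (fun x => x%:R : rat)) E4.
rewrite !natrD in E1 E2 E3 E4.
lra.
Qed.

Lemma bigmax_reidx N (h : 'I_N -> 'I_N) (F G : 'I_N -> rat) :
  (forall j, exists i, h i = j) -> (forall i, F (h i) = G i) ->
  \big[Num.max/0%R]_i F i = \big[Num.max/0%R]_i G i.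
Proof.
move=> surj FG; apply/le_anti/andP; split.
- apply/bigmax_leP; split; first exact: bigmax_ge_id.
  move=> j _; have [i <-] := surj j; rewrite FG; exact: le_bigmax.
- apply/bigmax_leP; split; first exact: bigmax_ge_id.
  move=> i _; rewrite -FG; exact: le_bigmax.
Qed.

Lemma natmax_reidx n' (h : 'I_n'.+1 -> 'I_n'.+1) (F G : 'I_n'.+1 -> nat) (c c' : rat) :
  (forall j, exists i, h i = j) -> (forall i, ((F (h i))%:R - c' = (G i)%:R - c)%R) ->
  (((\max_i F i)%:R - c') = ((\max_i G i)%:R - c))%R.
Proof.
move=> surj FG.
have [jF EF] := @bigop.eq_bigmax _ F (ltac:(by rewrite card_ord)).
have [jG EG] := @bigop.eq_bigmax _ G (ltac:(by rewrite card_ord)).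
apply/le_anti/andP; split.
- have [i Ei] := surj jF; rewrite EF -Ei FG lerD2r ler_nat.
  exact: leq_bigmax.
- rewrite EG -FG lerD2r ler_nat; exact: leq_bigmax.
Qed.

Lemma bigmin_reidx N (phi : 'S_N -> 'S_N) (F G : 'S_N -> rat) :
  (forall s, phi (phi s) = s) -> (forall s, F (phi s) = G s) ->
  \big[Num.min/F 1%g]_s F s = \big[Num.min/G 1%g]_s G s.
Proof.
move=> inv FG; apply/le_anti/andP; split.
- apply/bigmin_geP; split; first by rewrite -FG; exact: bigmin_le.
  by move=> s _; rewrite -FG; exact: bigmin_le.
- apply/bigmin_geP; split; first by rewrite -{2}(inv 1%g) FG; exact: bigmin_le.
  by move=> s _; rewrite -(inv s) FG; exact: bigmin_le.
Qed.

Definition shift_ord n' k (i : 'I_n'.+1) : 'I_n'.+1 :=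
  Ordinal (ltn_pmod (i + k) (ltn0Sn n')).

Lemma shift_surj n' k : (k <= n'.+1)%N ->
  forall j, exists i, @shift_ord n' k i = j.
Proof.
move=> hk j; exists (Ordinal (ltn_pmod (j + (n'.+1 - k)) (ltn0Sn n'))).
apply: val_inj => /=; rewrite modnDml -addnA subnK // modnDr modn_small //.
Qed.

Lemma wsum_shift n' k (s : 'S_n'.+1) (i : 'I_n'.+1) : (k <= n'.+1)%N ->
  (((wsum (n'.+1 - k) (s * revp n'.+1) (shift_ord k i))%:R - center n'.+1 (n'.+1 - k))
   = (wsum k s i)%:R - center n'.+1 k :> rat)%R.
Proof. by move=> hk; rewrite /= wsum_mod keyrat. Qed.

Lemma disc_perm_rev n' k (s : 'S_n'.+1) : (k <= n'.+1)%N ->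
  disc_perm (n'.+1 - k) (s * revp n'.+1) = disc_perm k s.
Proof.
move=> hk; rewrite /disc_perm.
apply: (bigmax_reidx (h := shift_ord k)); first exact: shift_surj.
by move=> i; rewrite wsum_shift.
Qed.

Lemma msum_perm_rev n' k (s : 'S_n'.+1) : (k <= n'.+1)%N ->
  msum_perm (n'.+1 - k) (s * revp n'.+1) = msum_perm k s.
Proof.
move=> hk; rewrite /msum_perm.
apply: (natmax_reidx (h := shift_ord k)); first exact: shift_surj.
by move=> i; rewrite wsum_shift.
Qed.

Lemma revp_invol N (s : 'S_N) : (s * revp N * revp N)%g = s.
Proof.
apply/permP => x; rewrite !permM /revp !permE; apply: val_inj => /=.
have := ltn_ord (s x); lia.
Qed.

Theorem proposition2p1 (n k : nat) :
  (0 < k)%N -> (k < n)%N ->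
  msum n (n - k) = msum n k /\ disc n (n - k) = disc n k.
Proof.
case: n => [|n'] // k0 kn; have hk : (k <= n'.+1)%N by exact: ltnW.
split.
- rewrite /msum; apply: (bigmin_reidx (phi := fun s => (s * revp n'.+1)%g)).
    exact: revp_invol.
  by move=> s; rewrite msum_perm_rev.
- rewrite /disc; apply: (bigmin_reidx (phi := fun s => (s * revp n'.+1)%g)).
    exact: revp_invol.
  by move=> s; rewrite disc_perm_rev.
Qed.
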